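(* Let $H_m,H_{el}$ be finite groups with an action $(h,g)\mapsto h\cdot g$ of $H_{el}$ on $H_m$ satisfying $h\cdot(gg')=(h\cdot g)(h\cdot g')$, and let $\mathcal{A}=F(H_m)\times\mathbb{C}H_{el}$ be the modified quantum double. Let $\Pi^A_\alpha$ be the irreducible representation of $\mathcal{A}$ associated with an $H_{el}$-orbit $A\subset H_m$ with preferred element $g_A$ and an irreducible representation $\alpha$ of $N_A=\{h\in H_{el}:h\cdot g_A=g_A\}$, and let $|\phi_r\rangle$ be a vector in its carrier space. Define $\mathcal{T}_r=\{a\in\mathcal{A}:(\mathrm{id}\otimes\Pi^A_\alpha)\Delta(a)(1\otimes|\phi_r\rangle)=a\otimes|\phi_r\rangle\}$. If $H_m$ is abelian, or if $g_A$ lies in the center of $H_m$ and $h\cdot g_A=g_A$ for all $h\in H_{el}$, then $\mathcal{T}_r$ is a Hopf subalgebra of $\mathcal{A}$.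
   Context: Modified quantum double: as a vector space $F(H_m)\otimes\mathbb{C}H_{el}$ with basis $P_gh$ ($g\in H_m$, $h\in H_{el}$), identified with $F(H_m\times H_{el})$ via $P_gh\leftrightarrow\delta_g\otimes\delta_h$. Structure: $P_ghP_{g'}h'=\delta_{g,h\cdot g'}P_ghh'$, $\Delta(P_gh)=\sum_{g'\in H_m}P_{g'}h\otimes P_{g'^{-1}g}h$, $\varepsilon(P_gh)=\delta_{g,e}$, $S(P_gh)=P_{h^{-1}\cdot g^{-1}}h^{-1}$. The carrier space of $\Pi^A_\alpha$ is $\{|\phi\rangle:H_{el}\to V_\alpha \mid |\phi(xn)\rangle=\alpha(n^{-1})|\phi(x)\rangle\ \forall n\in N_A\}$, with action $(\Pi^A_\alpha(f)\phi)(x)=\sum_{z\in H_{el}}f(x\cdot g_A,z)\,|\phi(z^{-1}x)\rangle$ for $f\in F(H_m\times H_{el})$. A Hopf subalgebra is a subalgebra containing $1$, closed under $\Delta$ (into its tensor square) and under $S$. *)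

(* Defs.v *)
From HB Require Import structures.
From mathcomp Require Import all_boot all_order all_algebra all_fingroup.
From mathcomp Require Import center mxrepresentation.
Set Implicit Arguments. Unset Strict Implicit. Unset Printing Implicit Defensive.
Import GRing.Theory.
Local Open Scope ring_scope.

(* Modified quantum double A = F(H_m) (x) C H_el, identified with
   F(H_m x H_el) via P_g h <-> delta_(g,h).  Here H_m, H_el are the
   (whole) finite groups gM, gE and act h g = h . g. *)
Section ModifiedQuantumDouble.
Variables (C : fieldType) (gM gE : finGroupType) (act : gE -> gM -> gM).

Local Notation QD := ({ffun gM * gE -> C}).
Local Notation QD2 := ({ffun (gM * gE) * (gM * gE) -> C}).

(* (P_g h)(P_g' h') = delta_(g, h.g') P_g (h h'), extended bilinearly *)
Definition qd_mul (f1 f2 : QD) : QD :=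
  [ffun x => \sum_(h : gE) f1 (x.1, h) * f2 (act h^-1 x.1, h^-1 * x.2)%g].

Definition qd_one : QD := [ffun x => ((x.2 == 1%g) : nat)%:R].

(* Delta(P_g h) = sum_g' P_g' h (x) P_(g'^-1 g) h *)
Definition qd_Delta (f : QD) : QD2 :=
  [ffun p => if p.1.2 == p.2.2 then f ((p.1.1 * p.2.1)%g, p.1.2) else 0].

(* S(P_g h) = P_(h^-1 . g^-1) h^-1, extended linearly *)
Definition qd_antipode (f : QD) : QD :=
  [ffun x => f ((act x.2^-1 x.1)^-1, x.2^-1)%g].

Definition qd_tensor (a b : QD) : QD2 := [ffun p => a p.1 * b p.2].

Definition in_tensor_square (T : QD -> Prop) (F : QD2) : Prop :=
  exists s : seq (QD * QD),
    (forall p, p \in s -> T p.1 /\ T p.2) /\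
    F = \sum_(p <- s) qd_tensor p.1 p.2.

Definition Hopf_subalgebra (T : QD -> Prop) : Prop :=
  T 0 /\
  (forall a b, T a -> T b -> T (a + b)) /\
  (forall (c : C) a, T a -> T [ffun x => c * a x]) /\
  T qd_one /\
  (forall a b, T a -> T b -> T (qd_mul a b)) /\
  (forall a, T a -> in_tensor_square T (qd_Delta a)) /\
  (forall a, T a -> T (qd_antipode a)).

(* Representation Pi^A_alpha.  alpha is given by a MathComp (row-vector)
   representation rho of N_A on 'rV_n; the paper's alpha(k) v corresponds
   to v *m rho k^-1, so alpha(k^-1)|phi(x)> = phi(x) *m rho k. *)
Variables (gA : gM) (NA : {group gE}) (n : nat) (rho : mx_representation C NA n).

Definition in_carrier (phi : {ffun gE -> 'rV[C]_n}) : Prop :=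
  forall (x k : gE), k \in NA -> phi (x * k)%g = phi x *m rho k.

Definition Pi (f : QD) (phi : {ffun gE -> 'rV[C]_n}) : {ffun gE -> 'rV[C]_n} :=
  [ffun x => \sum_(z : gE) f (act x gA, z) *: phi (z^-1 * x)%g].

(* T_r = {a | (id (x) Pi) Delta(a) (1 (x) phi) = a (x) phi}; elements of
   A (x) V are written as functions gM * gE -> V in the basis P_g h of A. *)
Definition Tr (phi : {ffun gE -> 'rV[C]_n}) (a : QD) : Prop :=
  forall y : gM * gE, Pi [ffun z => qd_Delta a (y, z)] phi = a y *: phi.

End ModifiedQuantumDouble.

(* Main.v *)
Require Import Defs.
From HB Require Import structures.
From mathcomp Require Import all_boot all_order all_algebra all_fingroup.
From mathcomp Require Import center mxrepresentation.
Set Implicit Arguments. Unset Strict Implicit. Unset Printing Implicit Defensive.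
Import GRing.Theory.
Local Open Scope ring_scope.

Section Proof5.
Variables (C : fieldType) (gM gE : finGroupType) (act : gE -> gM -> gM).
Hypothesis actM : forall h h' g, act (h * h')%g g = act h (act h' g).
Hypothesis act_morph : forall h g g', act h (g * g')%g = (act h g * act h g')%g.
Variables (gA : gM) (n : nat) (phi : {ffun gE -> 'rV[C]_n}).
Hypothesis Hcomm : forall x g, commute (act x gA) g.

Local Notation QD := ({ffun gM * gE -> C}).
Local Notation T := (Tr act gA phi).

Lemma Pi_Delta (a : QD) y :
  Pi act gA [ffun z => qd_Delta a (y, z)] phi =
  [ffun x => a (y.1 * act x gA, y.2)%g *: phi (y.2^-1 * x)%g].
Proof.
apply/ffunP => x; rewrite !ffunE (bigD1 y.2) //= !ffunE /= eqxx big1 ?addr0 //.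
by move=> z /negbTE; rewrite !ffunE /= eq_sym => ->; rewrite scale0r.
Qed.

Lemma TrE (a : QD) : T a <-> forall y1 y2 x,
  a (y1 * act x gA, y2)%g *: phi (y2^-1 * x)%g = a (y1, y2) *: phi x.
Proof.
split => H.
  move=> y1 y2 x; move/ffunP/(_ x): (H (y1, y2)).
  by rewrite Pi_Delta !ffunE.
move=> [y1 y2]; rewrite Pi_Delta; apply/ffunP => x; rewrite !ffunE; exact: H.
Qed.


Lemma T0 : T 0.
Proof. by apply/TrE => y1 y2 x; rewrite !ffunE !scale0r. Qed.

Lemma TD a b : T a -> T b -> T (a + b).
Proof.
move=> /TrE Ha /TrE Hb; apply/TrE => y1 y2 x.
by rewrite !ffunE !scalerDl Ha Hb.
Qed.

Lemma TZ (c : C) a : T a -> T [ffun x => c * a x].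
Proof.
move=> /TrE Ha; apply/TrE => y1 y2 x.
by rewrite !ffunE -!scalerA Ha.
Qed.

Lemma T1 : T (qd_one _ _ _).
Proof.
apply/TrE => y1 y2 x; rewrite !ffunE /=.
by case: eqP => [->|_]; rewrite ?invg1 ?mul1g // !scale0r.
Qed.

Lemma TM a b : T a -> T b -> T (qd_mul act a b).
Proof.
move=> /TrE Ha /TrE Hb; apply/TrE => y1 y2 x.
rewrite !ffunE /= !scaler_suml; apply: eq_bigr => h _.
have e : ((h^-1 * y2)^-1 * (h^-1 * x) = y2^-1 * x)%g.
  by rewrite invMg invgK -mulgA mulKVg.
rewrite act_morph -actM -e -[LHS]scalerA Hb.
by rewrite -scalerA scalerA [X in X *: _ = _]mulrC -scalerA Ha !scalerA mulrC.
Qed.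

Lemma TS a : T a -> T (qd_antipode act a).
Proof.
move=> /TrE Ha; apply/TrE => y1 y2 x.
rewrite !ffunE /= act_morph -actM.
set u := act y2^-1 y1; set w := act (y2^-1 * x)%g gA.
have -> : ((u * w)^-1 = u^-1 * w^-1)%g.
  by rewrite -(Hcomm (y2^-1 * x)%g u) invMg.
have := Ha (u^-1 * w^-1)%g (y2^-1)%g (y2^-1 * x)%g.
rewrite -/w -mulgA mulVg mulg1 invgK mulKVg => <-.
by [].
Qed.


Local Notation V := ({ffun gM * gE -> C^o}).
Local Notation W := ({ffun (gM * gE) * gE -> 'rV[C]_n}).

Definition Lf (a : V) : W :=
  [ffun p => a ((p.1.1 * act p.2 gA)%g, p.1.2) *: phi (p.1.2^-1 * p.2)%g
             - a p.1 *: phi p.2].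

Lemma Lf_lin : linear Lf.
Proof.
move=> c a b; apply/ffunP => p; rewrite !ffunE.
by rewrite !scalerDl -!scalerA scalerBr opprD addrACA.
Qed.


HB.instance Definition _ := GRing.isLinear.Build C V W *:%R Lf Lf_lin.

Definition U : {vspace V} := lker (linfun Lf).

Lemma memU (a : QD) : ((a : V) \in U) <-> T a.
Proof.
rewrite /U memv_ker lfunE /=; split.
  move/eqP/ffunP => H; apply/TrE => y1 y2 x.
  by have := H ((y1, y2), x); rewrite !ffunE /= => /eqP; rewrite subr_eq0 => /eqP.
move/TrE => H; apply/eqP/ffunP => -[[y1 y2] x]; rewrite !ffunE /= H.
by rewrite subrr.
Qed.

Definition P : 'End(V) := projv U.

Definition delta (q : gM * gE) : QD := [ffun p => (p == q)%:R].

Lemma P_decomp (x : QD) p : (P x) p = \sum_u x u * (P (delta u)) p.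
Proof.
have Hx : (x : V) = \sum_u x u *: (delta u : V).
  apply/ffunP => p'; rewrite sum_ffunE (bigD1 p') //= big1 ?addr0.
    by rewrite !ffunE eqxx -[RHS]/(x p' * 1) mulr1.
  by move=> u /negbTE nu; rewrite !ffunE eq_sym nu -[LHS]/(x u * 0) mulr0.
rewrite {1}Hx linear_sum sum_ffunE; apply: eq_bigr => u _.
by rewrite linearZ ffunE.
Qed.

Definition Pl (F : {ffun (gM * gE) * (gM * gE) -> C}) :
    {ffun (gM * gE) * (gM * gE) -> C} :=
  [ffun p => \sum_u (P (delta u)) p.1 * F (u, p.2)].

Lemma Pl_tensor (x y : QD) : Pl (qd_tensor x y) = qd_tensor (P x) y.
Proof.
apply/ffunP => -[p1 p2]; rewrite !ffunE /= P_decomp mulr_suml.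
by apply: eq_bigr => u _; rewrite ffunE /= mulrA [P _ _ * _]mulrC.
Qed.

Lemma Pl_sum I (s : seq I) (F : I -> {ffun (gM * gE) * (gM * gE) -> C}) :
  Pl (\sum_(i <- s) F i) = \sum_(i <- s) Pl (F i).
Proof.
apply/ffunP => p; rewrite !ffunE sum_ffunE.
under eq_bigr do rewrite sum_ffunE mulr_sumr.
rewrite exchange_big; apply: eq_bigr => i _; by rewrite ffunE.
Qed.


Section Coideal.
Variable a : QD.

Definition bq (q : gM * gE) : QD :=
  [ffun p : gM * gE => if p.2 == q.2 then a ((q.1 * p.1)%g, q.2) else 0].
Definition cq (q : gM * gE) : QD :=
  [ffun p : gM * gE => if p.2 == q.2 then a ((p.1 * q.1)%g, q.2) else 0].

Lemma Delta_L : qd_Delta a = \sum_q qd_tensor (delta q) (bq q).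
Proof.
apply/ffunP => -[p1 p2]; rewrite sum_ffunE (bigD1 p1) //= big1 ?addr0.
  by rewrite !ffunE /= eqxx mul1r eq_sym.
by move=> q /negbTE nq; rewrite !ffunE /= eq_sym nq mul0r.
Qed.

Lemma Delta_R : qd_Delta a = \sum_q qd_tensor (cq q) (delta q).
Proof.
apply/ffunP => -[p1 p2]; rewrite sum_ffunE (bigD1 p2) //= big1 ?addr0.
  rewrite !ffunE /= eqxx mulr1.
  by case: eqP => // ->.
by move=> q /negbTE nq; rewrite !ffunE /= (eq_sym p2) nq mulr0.
Qed.

Hypothesis Ta : T a.

Lemma Tb q : T (bq q).
Proof.
move/TrE: Ta => Ha; apply/TrE => y1 y2 x; rewrite !ffunE /=.
case: eqP => [->|_]; last by rewrite !scale0r.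
by rewrite mulgA Ha.
Qed.

Lemma Tc q : T (cq q).
Proof.
move/TrE: Ta => Ha; apply/TrE => y1 y2 x; rewrite !ffunE /=.
case: eqP => [->|_]; last by rewrite !scale0r.
by rewrite -mulgA (Hcomm x q.1) mulgA Ha.
Qed.

Lemma TDelta : in_tensor_square T (qd_Delta a).
Proof.
exists [seq (P (delta q) : QD, bq q) | q <- index_enum (Datatypes_prod__canonical__fintype_Finite gM gE)].
split.
  move=> p /mapP [q _ ->] /=; split; last exact: Tb.
  apply/memU; exact: memv_proj.
rewrite big_map /=.
transitivity (\sum_q qd_tensor (P (cq q)) (delta q)).
  rewrite {1}Delta_R; apply: eq_bigr => q _; rewrite projv_id //.
  apply/memU; exact: Tc.
transitivity (Pl (qd_Delta a)).
  by rewrite Delta_R Pl_sum; apply: eq_bigr => q _; rewrite Pl_tensor.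
rewrite Delta_L Pl_sum; apply: eq_bigr => q _; by rewrite Pl_tensor.
Qed.

End Coideal.

End Proof5.

Theorem mainTheorem5 (C : numClosedFieldType) (gM gE : finGroupType)
    (act : gE -> gM -> gM)
    (act1 : forall g, act 1%g g = g)
    (actM : forall h h' g, act (h * h')%g g = act h (act h' g))
    (act_morph : forall h g g', act h (g * g')%g = (act h g * act h g')%g)
    (gA : gM) (NA : {group gE})
    (hNA : NA :=: [set h | act h gA == gA])
    (n : nat) (rho : mx_representation C NA n) (rho_irr : mx_irreducible rho)
    (phi : {ffun gE -> 'rV[C]_n}) (phi_car : in_carrier rho phi) :
  abelian [set: gM] \/ (gA \in ('Z([set: gM]))%g /\ forall h, act h gA = gA) ->
  Hopf_subalgebra act (Tr act gA phi).
Proof.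
move=> Hyp.
have Hcomm : forall x g, commute (act x gA) g.
  case: Hyp => [/centsP Hab | [/centerP [_ Hc] Hact]] x g.
    by apply: Hab; rewrite inE.
  by rewrite Hact; apply: Hc; rewrite inE.
split; first exact: T0.
split; first exact: TD.
split; first exact: TZ.
split; first exact: T1.
split; first exact: TM.
split; first by move=> a Ta; apply: TDelta.
exact: TS.
Qed.
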